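(* Let $\mathcal{R}$ be the involutive system $u_{ij}=f_{ij}(x^1,x^2,x^3,u,u_i,u_j)$, $1\le i<j\le 3$, with infinite prolongation $\mathcal{R}^\infty$, characteristic vector fields $X_i=D_i$, rescaled contact form $\Theta=\mu\theta$, and characteristic coframe forms $\xi_j^k=X_j^k(\Theta)$. Then for every $k\ge 1$ and every $i\neq j$ in $\{1,2,3\}$, the form $X_i(\xi_j^k)$, restricted to $\mathcal{R}^\infty$, has adapted order less than or equal to $k$.
   Context: Setting: $U\subset\mathbb{R}^3$ open connected, $E=U\times(a,b)\to U$ trivial bundle with coordinates $(x^1,x^2,x^3,u)$, $J^\infty(E)$ its infinite jet bundle with coordinates $x^i,u,u_I$ and contact forms $\theta_I=du_I-\sum_{j}u_{Ij}dx^j$ (write $\theta=\theta_\emptyset=du-\sum_i u_i dx^i$). $\mathcal{R}$ is the system $F_{ij}:=u_{ij}-f_{ij}(x^1,x^2,x^3,u,u_i,u_j)=0$, $1\le i<j\le 3$, with $f_{ij}$ smooth and satisfying the integrability conditions $D_kf_{ij}=D_if_{kj}$ for distinct $i,j,k$ (so the system is involutive). $\mathcal{R}^\infty\subset J^\infty(E)$ is its infinite prolongation (locus where all $F_{ij}$ and all their total derivatives vanish), with coordinates $(x^i,u,u_i,u_{ii},\dots,u_{i^k},\dots)$. $D_i$ denotes the total derivative restricted to $\mathcal{R}^\infty$; these commute, and $X_i:=D_i$, $\sigma_i:=dx^i$. Forms on $\mathcal{R}^\infty$ are bigraded, $\Omega^{r,s}$ = forms of horizontal degree $r$ (in $dx^i$)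 and contact degree $s$; $d=d_H+d_V$. For a total vector field $X$ and $\omega\in\Omega^{r,s}$, $X(\omega)$ denotes the projected Lie derivative $\pi^{r,s}(\mathcal{L}_X\omega)$; one has $X_j(\theta_I)=\theta_{Ij}$ and $d_H\omega=\sum_i\sigma_i\wedge X_i(\omega)$. Applying $d_V$ to $F_{ij}=0$ gives on $\mathcal{R}^\infty$: $X_iX_j(\theta)+a^i_{ij}X_i(\theta)+a^j_{ij}X_j(\theta)+c_{ij}\theta=0$ with $a^i_{ij}=\partial F_{ij}/\partial u_i$, $a^j_{ij}=\partial F_{ij}/\partial u_j$, $c_{ij}=\partial F_{ij}/\partial u$. For a nonvanishing function $\mu$ on $\mathcal{R}^\infty$ set $\Theta=\mu\theta$. Define $\xi_i^k=X_i^k(\Theta)$ for $i=1,2,3$, $k\ge1$. A form on $\mathcal{R}^\infty$ has adapted order $\le k$ if it lies in the exterior algebra generated over $C^\infty(\mathcal{R}^\infty)$ by $\{\sigma_1,\sigma_2,\sigma_3,\Theta,\xi_1^1,\xi_2^1,\xi_3^1,\dots,\xi_1^k,\xi_2^k,\xi_3^k\}$; its adapted order is the minimal such $k$. *)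

(* Defs.v *)
From mathcomp Require Import all_boot all_order all_algebra.
Set Implicit Arguments. Unset Strict Implicit. Unset Printing Implicit Defensive.
Import GRing.Theory.
Local Open Scope ring_scope.

Section JetModel.
Variables (A : comUnitRingType) (M : lmodType A).

(* D i : total derivative D_i acting on functions C^oo(R^infty) = A. *)
Definition is_derivation (d : A -> A) : Prop :=
  (forall f g, d (f + g) = d f + d g) /\ (forall f g, d (f * g) = d f * g + f * d g).

(* X i : projected Lie derivative of the total vector field X_i = D_i on
   the module M of (0,1)-forms (contact one-forms) on R^infty. *)
Definition is_total_lie (d : A -> A) (x : M -> M) : Prop :=
  (forall w v, x (w + v) = x w + x v) /\
  (forall f w, x (f *: w) = d f *: w + f *: x w).

Definition Theta (mu : A) (theta : M) : M := mu *: theta.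
Definition xi (X : 'I_3 -> M -> M) (mu : A) (theta : M) (j : 'I_3) (k : nat) : M :=
  iter k (X j) (Theta mu theta).

(* A (0,1)-form has adapted order <= k iff it lies in the C^oo(R^infty)-span of
   Theta, xi_l^m (l = 1,2,3, 1 <= m <= k): the degree-(0,1) part of the exterior
   algebra generated by sigma_l, Theta, xi_l^m (m <= k). *)
Definition adapted_order_le (X : 'I_3 -> M -> M) (mu : A) (theta : M)
    (k : nat) (w : M) : Prop :=
  exists (c0 : A) (c : 'I_3 -> nat -> A),
    w = c0 *: Theta mu theta
        + \sum_(l < 3) \sum_(1 <= m < k.+1) c l m *: xi X mu theta l m.
End JetModel.

(* Main.v *)
Require Import Defs.
From mathcomp Require Import all_boot all_order all_algebra.
Import GRing.Theory.
Local Open Scope ring_scope.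

Section H.
Lemma ao_add (A : comUnitRingType) (M : lmodType A) X mu (theta : M) k w v :
  adapted_order_le X mu theta k w -> adapted_order_le X mu theta k v ->
  adapted_order_le X mu theta k (w + v).
Proof.
move=> [c0 [c ->]] [d0 [d ->]].
exists (c0 + d0), (fun l m => c l m + d l m).
rewrite scalerDl.
have -> : \sum_(l < 3) \sum_(1 <= m < k.+1) (c l m + d l m) *: xi X mu theta l m =
  \sum_(l < 3) \sum_(1 <= m < k.+1) c l m *: xi X mu theta l m +
  \sum_(l < 3) \sum_(1 <= m < k.+1) d l m *: xi X mu theta l m.
  rewrite -big_split; apply: eq_bigr => l _.
  rewrite -big_split; apply: eq_bigr => m _; by rewrite scalerDl.
by rewrite addrACA.
Qed.

Lemma ao_scale (A : comUnitRingType) (M : lmodType A) X mu (theta : M) k a w :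
  adapted_order_le X mu theta k w -> adapted_order_le X mu theta k (a *: w).
Proof.
move=> [c0 [c ->]].
exists (a * c0), (fun l m => a * c l m).
rewrite scalerDr scalerA scaler_sumr; congr (_ + _).
apply: eq_bigr => l _; rewrite scaler_sumr; apply: eq_bigr => m _.
by rewrite scalerA.
Qed.

Lemma ao_0 (A : comUnitRingType) (M : lmodType A) X mu (theta : M) k :
  adapted_order_le X mu theta k 0.
Proof.
exists 0, (fun _ _ => 0); rewrite scale0r add0r big1 // => l _.
by rewrite big1 // => m _; rewrite scale0r.
Qed.

Lemma ao_Theta (A : comUnitRingType) (M : lmodType A) X mu (theta : M) k :
  adapted_order_le X mu theta k (Theta mu theta).
Proof.
exists 1, (fun _ _ => 0); rewrite scale1r big1 ?addr0 // => l _.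
by rewrite big1 // => m _; rewrite scale0r.
Qed.

Lemma ao_xi (A : comUnitRingType) (M : lmodType A) X mu (theta : M) k l m :
  (1 <= m <= k)%N -> adapted_order_le X mu theta k (xi X mu theta l m).
Proof.
move=> hm.
exists 0, (fun l' m' => if (l' == l) && (m' == m) then 1 else 0).
rewrite scale0r add0r (bigD1 l) //= [X in _ + X]big1 ?addr0.
  rewrite (bigD1_seq m) /= ?iota_uniq //; last by rewrite mem_index_iota.
  rewrite !eqxx scale1r big1_seq ?addr0 // => m' /andP [hm' _].
  by rewrite (negbTE hm') andbF scale0r.
move=> l' hl'; rewrite big1 // => m' _.
by rewrite (negbTE hl') scale0r.
Qed.

Lemma ao_mono (A : comUnitRingType) (M : lmodType A) X mu (theta : M) k k' w :
  (k <= k')%N -> adapted_order_le X mu theta k w -> adapted_order_le X mu theta k' w.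
Proof.
move=> hk [c0 [c ->]].
exists c0, (fun l m => if (m <= k)%N then c l m else 0); congr (_ + _).
apply: eq_bigr => l _.
rewrite [RHS](@big_cat_nat _ _ _ k.+1) //=.
rewrite [X in _ = _ + X]big_nat_cond [X in _ = _ + X]big1 ?addr0.
  by apply: eq_big_nat => m /andP [_ hm]; rewrite ltnS in hm; rewrite hm.
move=> m /andP [/andP [hm _] _].
by rewrite leqNgt hm scale0r.
Qed.

Lemma ao_sum (A : comUnitRingType) (M : lmodType A) X mu (theta : M) k
  (I : Type) (r : seq I) (P : pred I) (F : I -> M) :
  (forall i, P i -> adapted_order_le X mu theta k (F i)) ->
  adapted_order_le X mu theta k (\sum_(i <- r | P i) F i).
Proof.
move=> h; apply: big_ind => //.
- exact: ao_0.
- by move=> ???; apply: ao_add.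
Qed.

Lemma X_sum (A : comUnitRingType) (M : lmodType A) (d : A -> A) (x : M -> M)
  (I : Type) (r : seq I) (P : pred I) (F : I -> M) :
  is_total_lie d x -> x (\sum_(i <- r | P i) F i) = \sum_(i <- r | P i) x (F i).
Proof.
move=> [hadd hsc].
have x0 : x 0 = 0.
  have := hadd 0 0; rewrite addr0 => /(congr1 (fun t => t - x 0)).
  by rewrite subrr addrK.
exact: (big_morph x hadd x0).
Qed.
Lemma ao_opp (A : comUnitRingType) (M : lmodType A) X mu (theta : M) k w :
  adapted_order_le X mu theta k w -> adapted_order_le X mu theta k (- w).
Proof. by move=> h; rewrite -scaleN1r; apply: ao_scale. Qed.

Lemma ao_X (A : comUnitRingType) (M : lmodType A) (D : 'I_3 -> A -> A)
  (X : 'I_3 -> M -> M) mu (theta : M) l k w :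
  (forall l, is_total_lie (D l) (X l)) ->
  (forall m, (1 <= m <= k)%N -> forall i j, i != j ->
     adapted_order_le X mu theta m (X i (xi X mu theta j m))) ->
  adapted_order_le X mu theta k w -> adapted_order_le X mu theta k.+1 (X l w).
Proof.
move=> hX hP [c0 [c ->]].
have [hadd hsc] := hX l.
rewrite hadd hsc (@X_sum _ _ _ _ _ _ _ _ (hX l)).
apply: ao_add; [apply: ao_add|].
- by apply: ao_scale; apply: ao_Theta.
- apply: ao_scale.
  change (X l (Theta mu theta)) with (xi X mu theta l 1).
  by apply: ao_xi.
apply: ao_sum => l' _.
rewrite big_nat_cond (@X_sum _ _ _ _ _ _ _ _ (hX l)).
apply: ao_sum => m /andP [/andP [h1 h2] _].
rewrite hsc; apply: ao_add; apply: ao_scale.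
  by apply: ao_xi; rewrite h1 /= ltnW.
have [e|ne] := eqVneq l l'.
  rewrite e; change (X l' (xi X mu theta l' m)) with (xi X mu theta l' m.+1).
  by apply: ao_xi.
apply: (@ao_mono _ _ _ _ _ m); first by apply: leq_trans (ltnW h2) _.
by apply: hP => //; rewrite h1 -ltnS.
Qed.
End H.

Theorem lemma3p3 (A : comUnitRingType) (M : lmodType A)
  (D : 'I_3 -> A -> A) (X : 'I_3 -> M -> M) (theta : M)
  (a_i a_j c : 'I_3 -> 'I_3 -> A) (mu : A)
  (hD : forall i, is_derivation (D i))
  (hDcomm : forall i j f, D i (D j f) = D j (D i f))
  (hX : forall i, is_total_lie (D i) (X i))
  (hXcomm : forall i j w, X i (X j w) = X j (X i w))
  (hrel : forall i j : 'I_3, (i < j)%N ->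
     X i (X j theta) + a_i i j *: X i theta + a_j i j *: X j theta
       + c i j *: theta = 0)
  (hmu : mu \is a GRing.unit) :
  forall (k : nat) (i j : 'I_3), (1 <= k)%N -> i != j ->
    adapted_order_le X mu theta k (X i (xi X mu theta j k)).
Proof.
have hth : adapted_order_le X mu theta 1 theta.
  have e : theta = mu^-1 *: Theta mu theta by rewrite /Theta scalerA mulVr ?scale1r.
  rewrite [X in adapted_order_le _ _ _ _ X]e.
  by apply: ao_scale; apply: ao_Theta.
have hXth : forall l, adapted_order_le X mu theta 1 (X l theta).
  move=> l.
  have -> : X l theta = mu^-1 *: (xi X mu theta l 1 - D l mu *: theta).
    rewrite /xi /= /Theta (hX l).2 [X in X - _]addrC addrK.
    by rewrite scalerA mulVr ?scale1r.
  apply: ao_scale; apply: ao_add; first by apply: ao_xi.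
  by apply: ao_opp; apply: ao_scale.
have hrel' : forall i j : 'I_3, (i < j)%N ->
    adapted_order_le X mu theta 1 (X i (X j theta)).
  move=> i j lt; move: (hrel i j lt); rewrite -!addrA => /eqP.
  rewrite addr_eq0 => /eqP ->.
  apply: ao_opp; apply: ao_add; first by apply: ao_scale.
  by apply: ao_add; apply: ao_scale.
have hXX : forall i j : 'I_3, i != j ->
    adapted_order_le X mu theta 1 (X i (X j theta)).
  move=> i j ne; case: (ltngtP i j) => h.
  - exact: hrel'.
  - by rewrite hXcomm; apply: hrel'.
  - by move: ne; rewrite (val_inj h) eqxx.
have base : forall i j : 'I_3, i != j ->
    adapted_order_le X mu theta 1 (X i (xi X mu theta j 1)).
  move=> i j ne.
  change (X i (xi X mu theta j 1)) with (X i (X j (mu *: theta))).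
  rewrite (hX j).2 (hX i).1 !(hX i).2.
  apply: ao_add; apply: ao_add; apply: ao_scale => //.
  exact: hXX.
have main : forall n k, (1 <= k <= n)%N -> forall i j : 'I_3, i != j ->
    adapted_order_le X mu theta k (X i (xi X mu theta j k)).
  elim=> [|n IH] [|k'] //=.
  rewrite ltnS => hk i j ne.
  case: k' hk => [_|k' hk]; first exact: base.
  rewrite hXcomm; apply: (@ao_X _ _ D) => //.
    move=> m /andP [h1 h2]; apply: IH; rewrite h1 /=.
    exact: leq_trans h2 hk.
  by apply: IH.
move=> k i j hk ne; apply: (main k) => //; by rewrite hk leqnn.
Qed.
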